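(* Let $p\ge5$, let $\lambda$ be the leftmost assignment and $\alpha$ any assignment on the white metallic tree. For every positive integer $\nu$, let $\lambda_\ell(\nu)$ and $\alpha_\ell(\nu)$ be the leftmost (smallest) son of $\nu$ in $\mathcal W_\lambda$ and in $\mathcal W_\alpha$ respectively, and $\delta_{\lambda\alpha}(\nu)=\alpha_\ell(\nu)-\lambda_\ell(\nu)$. Then $0\le\delta_{\lambda\alpha}(\nu)\le 1$ for every $\nu$.
   Context: Fix $p\ge5$. White metallic tree under an assignment $\alpha$, $\mathcal W_\alpha$: nodes are the positive integers, each black or white; root $1$ is white; nodes are processed in increasing order and node $\nu$ receives $p-2$ sons if it is white and $p-3$ sons if it is black, namely the smallest integers not yet used, in increasing order; an assignment $\alpha$ specifies, for each node $\nu$, the position (among the sons of $\nu$, leftmost = position $1$) of its unique black son, all other sons being white (the position may depend on the node). The leftmost assignment $\lambda$ always puts the black son at position $1$. *)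

(* Defs.v *)
From mathcomp Require Import all_boot.
Set Implicit Arguments. Unset Strict Implicit. Unset Printing Implicit Defensive.

(* White metallic tree W_alpha for a fixed p.  Nodes are positive integers
   (node 0 is unused).  A colouring is a function col : nat -> bool,
   [true] meaning black.  An assignment alpha : nat -> nat gives for each node
   nu the position (1-based, leftmost = 1) of its unique black son. *)

Definition nsons (p : nat) (b : bool) : nat := if b then p - 3 else p - 2.

(* leftmost son of node nu >= 1 when nodes are processed in increasing order
   and each receives the smallest unused integers: node 1 gets 2, 3, ...;
   node nu gets the nsons(col nu) integers starting at lson col nu. *)
Definition lson (p : nat) (col : nat -> bool) (nu : nat) : nat :=
  2 + sumn [seq nsons p (col i) | i <- iota 1 nu.-1].

(* colour of node m computed with fuel k (correct whenever m <= k):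
   m is black iff its father nu (the node with lson nu <= m < lson nu + #sons)
   has its black son at position alpha nu, i.e. m = lson nu + alpha nu - 1.
   The root 1 is white. *)
Fixpoint blk (p : nat) (alpha : nat -> nat) (k m : nat) : bool :=
  match k with
  | 0 => false
  | k'.+1 =>
      let col := blk p alpha k' in
      has (fun nu => (lson p col nu <= m < lson p col nu + nsons p (col nu))
                     && (m == lson p col nu + alpha nu - 1))
          (iota 1 m.-1)
  end.

Definition black (p : nat) (alpha : nat -> nat) (m : nat) : bool :=
  blk p alpha m m.

Definition leftmost_son (p : nat) (alpha : nat -> nat) (nu : nat) : nat :=
  lson p (black p alpha) nu.

Definition assignment (p : nat) (alpha : nat -> nat) : Prop :=
  forall nu, 0 < nu -> 1 <= alpha nu <= nsons p (black p alpha nu).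

Definition leftmost_assignment : nat -> nat := fun _ => 1.

(* Main.v *)
Require Import Defs.
From mathcomp Require Import all_boot.
From mathcomp Require Import zify.
Set Implicit Arguments. Unset Strict Implicit.

Lemma blk0 p a k : blk p a k 0 = false.
Proof. by case: k. Qed.

Lemma lson_ext p (c1 c2 : nat -> bool) nu :
  (forall i, 0 < i < nu -> c1 i = c2 i) -> lson p c1 nu = lson p c2 nu.
Proof.
move=> H; rewrite /lson; congr (2 + sumn _); apply/eq_in_map => i.
rewrite mem_iota => /andP [h1 h2]; rewrite H //; apply/andP; split; lia.
Qed.

Lemma blk_stable p a m : forall k1 k2, m <= k1 -> m <= k2 ->
  blk p a k1 m = blk p a k2 m.
Proof.
elim/ltn_ind: m => m IH k1 k2.
case: m IH => [|m] IH; first by rewrite !blk0.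
case: k1 => [|k1] //; case: k2 => [|k2] // h1 h2 /=.
apply: eq_in_has => nu; rewrite mem_iota => /andP [n1 n2].
have E : forall i, 0 < i <= nu -> blk p a k1 i = blk p a k2 i.
  move=> i /andP [i1 i2]; apply: IH; lia.
rewrite (E nu) ?n1 //; last by apply/andP; split; lia.
rewrite (@lson_ext p (blk p a k1) (blk p a k2)) // => i /andP [i1 i2].
apply: E; apply/andP; split; lia.
Qed.

Lemma black_eq p a m : black p a m =
  has (fun nu => (lson p (black p a) nu <= m <
                  lson p (black p a) nu + nsons p (black p a nu))
                 && (m == lson p (black p a) nu + a nu - 1))
      (iota 1 m.-1).
Proof.
rewrite /black; case: m => [|m] //=.
apply: eq_in_has => nu; rewrite mem_iota => /andP [n1 n2].
have E : forall i, 0 < i <= nu -> blk p a m i = blk p a i i.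
  move=> i /andP [i1 i2]; apply: blk_stable; lia.
rewrite (E nu) ?n1 //; last by apply/andP; split; lia.
rewrite (@lson_ext p (blk p a m) (black p a)) // => i /andP [i1 i2].
apply: E; apply/andP; split; lia.
Qed.

Lemma L_succ p col nu : 0 < nu ->
  lson p col nu.+1 = lson p col nu + nsons p (col nu).
Proof.
case: nu => [|n] // _; rewrite /lson.
have -> : iota 1 n.+2.-1 = iota 1 n ++ [:: n.+1] by rewrite (_ : n.+2.-1 = n + 1) ?iotaD ?add1n // addn1.
rewrite map_cat sumn_cat /=; lia.
Qed.

Lemma L1 p col : lson p col 1 = 2.
Proof. by []. Qed.

Lemma nsons_ge p b : 5 <= p -> 2 <= nsons p b.
Proof. rewrite /nsons; case: b; lia. Qed.

Lemma nsons_col p b : 5 <= p -> nsons p b + b = p - 2.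
Proof. rewrite /nsons; case: b => /=; lia. Qed.

Lemma L_ge p col nu : 5 <= p -> 0 < nu -> nu < lson p col nu.
Proof.
move=> hp; elim: nu => [|nu IH] // _.
case: nu IH => [|nu] IH; first by rewrite L1.
rewrite L_succ //; have := nsons_ge (col nu.+1) hp; have := IH isT; lia.
Qed.

Lemma L_mono p col i j : 5 <= p -> 0 < i -> i < j -> lson p col i.+1 <= lson p col j.
Proof.
move=> hp hi; elim: j => [|j IH] //; rewrite ltnS leq_eqVlt => /orP [/eqP->//|h].
rewrite (@L_succ p col j); last lia. have := IH h; lia.
Qed.

Definition bs p a nu := lson p (black p a) nu + a nu - 1.
Definition B p a n := count (black p a) (iota 1 n).

Lemma bs_bounds p a nu : 5 <= p -> assignment p a -> 0 < nu ->
  lson p (black p a) nu <= bs p a nu < lson p (black p a) nu.+1.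
Proof.
move=> hp ha hn; have := ha nu hn; rewrite L_succ // /bs; lia.
Qed.

Lemma bs_lt p a i j : 5 <= p -> assignment p a -> 0 < i -> i < j -> bs p a i < bs p a j.
Proof.
move=> hp ha hi hij; have := bs_bounds hp ha hi; have := bs_bounds hp ha (ltn_trans hi hij).
have := L_mono (black p a) hp hi hij; lia.
Qed.

Lemma bs_le p a i j : 5 <= p -> assignment p a -> 0 < i -> i <= j -> bs p a i <= bs p a j.
Proof.
move=> hp ha hi; rewrite leq_eqVlt => /orP [/eqP->//|h].
by apply: ltnW; apply: bs_lt.
Qed.

Lemma bs_gt p a nu : 5 <= p -> assignment p a -> 0 < nu -> nu < bs p a nu.
Proof.
move=> hp ha hn; have := bs_bounds hp ha hn; have := L_ge (black p a) hp hn; lia.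
Qed.

Lemma black_char p a m : 5 <= p -> assignment p a ->
  black p a m <-> exists nu, 0 < nu /\ bs p a nu = m.
Proof.
move=> hp ha; rewrite black_eq; split.
  move/hasP => [nu]; rewrite mem_iota => /andP [n1 _] /andP [_ /eqP ->].
  by exists nu; split.
move=> [nu [hn hm]]; apply/hasP; exists nu.
  rewrite mem_iota; have := bs_gt hp ha hn; lia.
have := bs_bounds hp ha hn; rewrite L_succ // -hm /bs => hh.
rewrite eqxx andbT; apply/andP; split; lia.
Qed.

Lemma B_succ p a n : B p a n.+1 = B p a n + black p a n.+1.
Proof. rewrite /B -[n.+1]addn1 iotaD count_cat /= add1n addn0 [n + 1]addn1 //. Qed.

Lemma L_B p a n : 5 <= p ->
  lson p (black p a) n.+1 + B p a n = 2 + n * (p - 2).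
Proof.
move=> hp; elim: n => [|n IH]; first by rewrite L1.
rewrite L_succ // B_succ; have := nsons_col (black p a n.+1) hp; lia.
Qed.

Lemma B_inv p a n : 5 <= p -> assignment p a ->
  (B p a n = 0 \/ bs p a (B p a n) <= n) /\ n < bs p a (B p a n).+1.
Proof.
move=> hp ha; elim: n => [|n [IH1 IH2]].
  split; first by left. by have := bs_gt hp ha (isT : 0 < 1).
rewrite B_succ; set k := B p a n in IH1 IH2 *.
case hb: (black p a n.+1).
  have [nu [hn hnu]] := (black_char _ hp ha).1 hb.
  have E : nu = k.+1.
    case: (ltngtP nu k.+1) => // h.
      have := bs_le hp ha hn (_ : nu <= k); case: IH1; lia.
    have := bs_lt hp ha (isT : 0 < k.+1) h; lia.
  subst nu; rewrite addn1; split; first by right; lia.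
  have := bs_lt hp ha (isT : 0 < k.+1) (ltnSn k.+1); lia.
rewrite addn0; split; first by case: IH1; [left | right; lia].
case: (ltngtP n.+1 (bs p a k.+1)) => // h; first lia.
have : black p a n.+1 by apply/(black_char _ hp ha); exists k.+1.
by rewrite hb.
Qed.

Lemma B_ge p a n j : 5 <= p -> assignment p a -> 0 < j -> bs p a j <= n -> j <= B p a n.
Proof.
move=> hp ha hj hb; have [_ h] := B_inv n hp ha.
case: (leqP j (B p a n)) => // hl.
have := bs_le hp ha (isT : 0 < (B p a n).+1) hl; lia.
Qed.

Lemma lam_assign p : 5 <= p -> assignment p leftmost_assignment.
Proof. move=> hp nu _; have := nsons_ge (black p leftmost_assignment nu) hp; rewrite /leftmost_assignment => h; apply/andP; split => //; exact: ltnW h. Qed.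

Local Notation l := leftmost_assignment.

Lemma mainP p a : 5 <= p -> assignment p a -> forall n,
  B p a n <= B p leftmost_assignment n <= B p a n + 1.
Proof.
move=> hp ha; have hl := lam_assign hp.
elim/ltn_ind => n IH.
have bsl : forall j, bs p l j = lson p (black p l) j by move=> j; rewrite /bs /leftmost_assignment addnK.
have [Ia1 Ia2] := B_inv n hp ha.
have [Il1 Il2] := B_inv n hp hl.
have Gl := @B_ge p l n. 
set ka := B p a n in Ia1 Ia2 *.
set kl := B p l n in Il1 Il2 Gl *.
apply/andP; split.
  case: (leqP ka kl) => // hlt.
  have ka0 : 0 < ka by lia.
  case: Ia1 => [|h1]; first lia.
  have g := bs_gt hp ha ka0.
  have P := IH ka.-1 (ltac:(lia)).
  have e1 := L_B a ka.-1 hp. have e2 := L_B l ka.-1 hp.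
  rewrite prednK // in e1 e2.
  have := bs_bounds hp ha ka0.
  have := Gl ka hp hl ka0; rewrite bsl; lia.

case: (leqP kl (ka + 1)) => // hlt.
case: Il1 => [|h1]; first lia.
have hj : bs p l ka.+2 <= n.
  apply: leq_trans h1; apply: bs_le => //; lia.
rewrite bsl in hj.
have g := L_ge (black p l) hp (isT : 0 < ka.+2).
have P := IH ka.+1 (ltac:(lia)).
have e1 := L_B a ka.+1 hp. have e2 := L_B l ka.+1 hp.
have := bs_bounds hp ha (isT : 0 < ka.+1). lia.
Qed.

Theorem lemma6 (p : nat) (alpha : nat -> nat) :
  5 <= p -> assignment p alpha ->
  forall nu : nat, 0 < nu ->
    leftmost_son p leftmost_assignment nu <= leftmost_son p alpha nu
    <= leftmost_son p leftmost_assignment nu + 1.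
Proof.
move=> hp ha [|n] // _; rewrite /leftmost_son.
have := mainP hp ha n.
have := L_B alpha n hp. have := L_B leftmost_assignment n hp. lia.
Qed.
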